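(* Let $B\in\mathcal A_n$. The ASMs covered by $B$ in ASM order are exactly the matrices $r_{i,i+1}^{k,k+1}(B)$ where $R_{i,i+1}^{k,k+1}$ ranges over the essential points of $B$, and distinct essential points give distinct such ASMs; thus essential points of $B$ are in bijection with the elements covered by $B$. Consequently, every covering relation $A\lessdot B$ in ASM order is an edge $A\to B$ of the ASM graph.
   Context: $\mathcal A_n$ is the set of $n\times n$ alternating sign matrices (entries in $\{-1,0,1\}$, partial row and column sums in $\{0,1\}$, full row and column sums $1$). The corner sum matrix is $\widetilde A(i,j)=\sum_{p\le i,q\le j}a_{pq}$, with $\widetilde A(i,j)=0$ if $i=0$ or $j=0$. ASM order: $A\le B$ iff $\widetilde A(i,j)\ge\widetilde B(i,j)$ for all $i,j$. For $i<j$, $k<l$ in $[n]$, $R_{ij}^{kl}=\{(p,q): i\le p<j,\ k\le q<l\}$ and $\widetilde R_{ij}^{kl}$ is its $0/1$ indicator matrix. $E(A)$ (essential rectangles): those $R_{ij}^{kl}$ with, for all $(p,q)\in R_{ij}^{kl}$, $\widetilde A(p,k)=\widetilde A(p,k-1)$, $\widetilde A(p,l)=\widetilde A(p,l-1)+1$, $\widetilde A(i,q)=\widetilde A(i-1,q)$, $\widetilde A(j,q)=\widetilde A(j-1,q)+1$. $E^*(A)$ (dual essential rectangles): those with $\widetilde A(p,k)=\widetilde A(p,k-1)+1$, $\widetilde A(p,l)=\widetilde A(p,l-1)$, $\widetilde A(i,q)=\widetilde A(i-1,q)+1$, $\widetilde A(j,q)=\widetilde A(j-1,q)$. An essential point of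 $A$ is an essential rectangle $R_{ij}^{kl}\in E(A)$ with $j=i+1$ and $l=k+1$. The operator $r_{ij}^{kl}$ sends $A$ to the ASM with corner sum matrix $\widetilde A+\widetilde R_{ij}^{kl}$ if $R_{ij}^{kl}\in E(A)$, $\widetilde A-\widetilde R_{ij}^{kl}$ if $R_{ij}^{kl}\in E^*(A)$, $\widetilde A$ otherwise. The bigrassmannian statistic is $\beta(A)=\sum_{i,j}\min(i,j)-\sum_{i,j}\widetilde A(i,j)$. ASM graph edge: $A\to B$ if $B=r_{ij}^{kl}(A)$ for some $i<j$, $k<l$ and $\beta(A)<\beta(B)$. *)

(* Defs.v *)
From HB Require Import structures.
From mathcomp Require Import all_boot all_order all_algebra.
Set Implicit Arguments. Unset Strict Implicit. Unset Printing Implicit Defensive.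
Import Order.TTheory GRing.Theory Num.Theory.
Local Open Scope ring_scope.

(* n x n integer matrices; matrix entries are 0-based (p : 'I_n),
   while corner sums / rectangles use the paper's 1-based indices. *)
Section ASM.
Variable n : nat.

Definition is_asm (A : 'M[int]_n) : Prop :=
  [/\ (forall i j, A i j \in [:: -1; 0; 1]),
      (forall (i : 'I_n) (m : nat), (m <= n)%N ->
         \sum_(q < n | (q < m)%N) A i q \in [:: 0; 1]),
      (forall (j : 'I_n) (m : nat), (m <= n)%N ->
         \sum_(p < n | (p < m)%N) A p j \in [:: 0; 1]),
      (forall i : 'I_n, \sum_(q < n) A i q = 1) &
      (forall j : 'I_n, \sum_(p < n) A p j = 1)].

Definition cs (A : 'M[int]_n) (i j : nat) : int :=
  \sum_(p < n | (p < i)%N) \sum_(q < n | (q < j)%N) A p q.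

Definition asm_le (A B : 'M[int]_n) : Prop :=
  forall i j : nat, (1 <= i <= n)%N -> (1 <= j <= n)%N -> cs B i j <= cs A i j.

Definition asm_lt (A B : 'M[int]_n) : Prop := asm_le A B /\ A <> B.

Definition asm_covers (A B : 'M[int]_n) : Prop :=
  [/\ is_asm A, is_asm B, asm_lt A B &
      ~ exists C, [/\ is_asm C, asm_lt A C & asm_lt C B]].

Definition rect_ok (i j k l : nat) : bool :=
  [&& (1 <= i)%N, (i < j)%N, (j <= n)%N, (1 <= k)%N, (k < l)%N & (l <= n)%N].

Definition inE (A : 'M[int]_n) (i j k l : nat) : bool :=
  rect_ok i j k l &&
  [forall p : 'I_n.+1, forall q : 'I_n.+1,
     ((i <= p < j)%N && (k <= q < l)%N) ==>
     [&& cs A p k == cs A p k.-1,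
         cs A p l == cs A p l.-1 + 1,
         cs A i q == cs A i.-1 q &
         cs A j q == cs A j.-1 q + 1]].

Definition inEstar (A : 'M[int]_n) (i j k l : nat) : bool :=
  rect_ok i j k l &&
  [forall p : 'I_n.+1, forall q : 'I_n.+1,
     ((i <= p < j)%N && (k <= q < l)%N) ==>
     [&& cs A p k == cs A p k.-1 + 1,
         cs A p l == cs A p l.-1,
         cs A i q == cs A i.-1 q + 1 &
         cs A j q == cs A j.-1 q]].

Definition rind (i j k l p q : nat) : int :=
  ((i <= p < j)%N && (k <= q < l)%N)%:R.

Definition r_cs (A : 'M[int]_n) (i j k l : nat) (p q : nat) : int :=
  if inE A i j k l then cs A p q + rind i j k l p q
  else if inEstar A i j k l then cs A p q - rind i j k l p q
  else cs A p q.

(* r_{ij}^{kl}(A): the matrix whose corner sum matrix is r_cs A i j k l *)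
Definition rop (A : 'M[int]_n) (i j k l : nat) : 'M[int]_n :=
  \matrix_(p < n, q < n)
    (r_cs A i j k l p.+1 q.+1 - r_cs A i j k l p q.+1
     - r_cs A i j k l p.+1 q + r_cs A i j k l p q).

Definition essential_point (A : 'M[int]_n) (i k : nat) : bool :=
  inE A i i.+1 k k.+1.

Definition beta (A : 'M[int]_n) : int :=
  \sum_(i < n) \sum_(j < n) (minn i.+1 j.+1)%:Z - \sum_(i < n) \sum_(j < n) cs A i.+1 j.+1.

Definition asm_edge (A B : 'M[int]_n) : Prop :=
  exists i j k l, [/\ rect_ok i j k l, B = rop A i j k l & beta A < beta B].

End ASM.

(* Main.v *)
Require Import Defs.
From HB Require Import structures.
From mathcomp Require Import all_boot all_order all_algebra.
From mathcomp Require Import zify ring.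
Import Order.TTheory GRing.Theory Num.Theory.
Local Open Scope ring_scope.

Section S.
Variable n : nat.
Implicit Types A B C E : 'M[int]_n.

Lemma sum_ltS (F : 'I_n -> int) (p : 'I_n) :
  \sum_(x < n | (x < p.+1)%N) F x = \sum_(x < n | (x < p)%N) F x + F p.
Proof.
rewrite (bigD1 p) //= addrC; congr (_ + _); apply: eq_bigl => x.
by rewrite ltnS -val_eqE /= leq_eqVlt; case: ltngtP.
Qed.

Lemma sum_ltn (F : 'I_n -> int) m : (n <= m)%N ->
  \sum_(x < n | (x < m)%N) F x = \sum_(x < n) F x.
Proof. by move=> h; apply: eq_bigl => x; rewrite (leq_trans (ltn_ord x)). Qed.

Lemma sum_lt0 (F : 'I_n -> int) : \sum_(x < n | (x < 0)%N) F x = 0.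
Proof. by rewrite big_pred0. Qed.

Lemma cs0l A q : cs A 0 q = 0.
Proof. exact: sum_lt0. Qed.
Lemma cs0r A p : cs A p 0 = 0.
Proof. by rewrite /cs big1 // => i _; rewrite sum_lt0. Qed.

Lemma cs_rowS A (p : 'I_n) q :
  cs A p.+1 q = cs A p q + \sum_(c < n | (c < q)%N) A p c.
Proof. exact: sum_ltS. Qed.

Lemma cs_colS A p (q : 'I_n) :
  cs A p q.+1 = cs A p q + \sum_(r < n | (r < p)%N) A r q.
Proof. by rewrite /cs -big_split; apply: eq_bigr => r _; exact: sum_ltS. Qed.

Lemma cs_big A p q : (n <= p)%N -> cs A p q = cs A n q.
Proof. by move=> h; rewrite /cs sum_ltn // sum_ltn. Qed.
Lemma cs_bigr A p q : (n <= q)%N -> cs A p q = cs A p n.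
Proof. by move=> h; rewrite /cs; apply: eq_bigr => r _; rewrite sum_ltn // sum_ltn. Qed.

Lemma csL1 A (p q : 'I_n) :
  cs A p.+1 q.+1 = A p q + cs A p q.+1 + cs A p.+1 q - cs A p q.
Proof.
rewrite !cs_rowS sum_ltS; ring.
Qed.

Definition mxf (f : nat -> nat -> int) : 'M[int]_n :=
  \matrix_(p < n, q < n) (f p.+1 q.+1 - f p q.+1 - f p.+1 q + f p q).

Lemma cs_mxf f : (forall q, f 0%N q = 0) -> (forall p, f p 0%N = 0) ->
  forall p q, (p <= n)%N -> (q <= n)%N -> cs (mxf f) p q = f p q.
Proof.
move=> h0 h0' p; elim: p => [|p IHp] q hp hq; first by rewrite cs0l h0.
elim: q hq => [|q IHq] hq; first by rewrite cs0r h0'.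
have hp' : (p < n)%N by []. have hq' : (q < n)%N by [].
have := csL1 (mxf f) (Ordinal hp') (Ordinal hq'); rewrite mxE /= => ->.
rewrite IHp ?IHq ?IHp //; try lia; exact: ltnW.
Qed.

Lemma cs_inj A C : (forall p q, (1 <= p <= n)%N -> (1 <= q <= n)%N -> cs A p q = cs C p q) -> A = C.
Proof.
move=> h.
have h' : forall p q, (p <= n)%N -> (q <= n)%N -> cs A p q = cs C p q.
  move=> [|p] [|q] hp hq; rewrite ?cs0l ?cs0r //; exact: h.
apply/matrixP => p q.
have := csL1 A p q; have := csL1 C p q.
rewrite !h' ?(ltnW (ltn_ord p)) ?(ltnW (ltn_ord q)) //; lia.
Qed.


Definition valid A := [/\
  (forall p q, (p <= n)%N -> (q < n)%N -> 0 <= cs A p q.+1 - cs A p q <= 1),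
  (forall p q, (p < n)%N -> (q <= n)%N -> 0 <= cs A p.+1 q - cs A p q <= 1),
  (forall q, (q <= n)%N -> cs A n q = q%:Z) &
  (forall p, (p <= n)%N -> cs A p n = p%:Z)].

Lemma in01 (x : int) : (x \in [:: 0; 1]) = (0 <= x <= 1).
Proof. rewrite !inE; lia. Qed.

Lemma asm_valid A : is_asm A -> valid A.
Proof.
case=> _ hr hc hR hC; split.
- move=> p q hp hq; have := cs_colS A p (Ordinal hq); rewrite /= => ->.
  rewrite [X in X - _]addrC addrK -in01; exact: hc.
- move=> p q hp hq; have := cs_rowS A (Ordinal hp) q; rewrite /= => ->.
  rewrite [X in X - _]addrC addrK -in01; exact: hr.
- elim=> [|q IH] hq; first by rewrite cs0r.
  have := cs_colS A n (Ordinal hq); rewrite /= => ->.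
  rewrite IH ?(ltnW hq) // sum_ltn // hC; lia.
- elim=> [|p IH] hp; first by rewrite cs0l.
  have := cs_rowS A (Ordinal hp) n; rewrite /= => ->.
  rewrite IH ?(ltnW hp) // sum_ltn // hR; lia.
Qed.

Lemma valid_asm A : valid A -> is_asm A.
Proof.
case=> hH hV hn hn'; split.
- move=> i j; rewrite !inE.
  have := csL1 A i j.
  have := hV i j (ltn_ord i) (ltnW (ltn_ord j)).
  have := hV i j.+1 (ltn_ord i) (ltn_ord j).
  lia.
- move=> i m hm; rewrite in01.
  have := cs_rowS A i m => e.
  have := hV i m (ltn_ord i) hm; lia.
- move=> j m hm; rewrite in01.
  have := cs_colS A m j => e.
  have := hH m j hm (ltn_ord j); lia.
- move=> i; rewrite -(sum_ltn _ _ (leqnn n)).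
  have := cs_rowS A i n => e.
  have := hn' i (ltnW (ltn_ord i)); have := hn' i.+1 (ltn_ord i); lia.
- move=> j; rewrite -(sum_ltn _ _ (leqnn n)).
  have := cs_colS A n j => e.
  have := hn j (ltnW (ltn_ord j)); have := hn j.+1 (ltn_ord j); lia.
Qed.


Definition delta (i k p q : nat) : int := ((p == i) && (q == k))%:R.

Lemma essP B i k : essential_point B i k =
  [&& (0 < i < n)%N, (0 < k < n)%N &
      [&& cs B i k == cs B i k.-1, cs B i k.+1 == cs B i k + 1,
          cs B i k == cs B i.-1 k & cs B i.+1 k == cs B i k + 1]].
Proof.
rewrite /essential_point /Defs.inE /rect_ok; apply/idP/idP.
- case/andP => /and3P[h1 _ /and4P[h3 h4 _ h6]] /forallP H.
  have hi : (i < n.+1)%N by lia.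
  have hk : (k < n.+1)%N by lia.
  move: (H (Ordinal hi)) => /forallP /(_ (Ordinal hk)) /implyP /=.
  rewrite ?leqnn ?ltnSn => /(_ isT) ->.
  by rewrite h1 h3 h4 h6.
- case/and3P => /andP[h1 h3] /andP[h4 h6] E.
  rewrite h1 h3 h4 h6 ?ltnSn ?leqnn /=.
  apply/forallP => p; apply/forallP => q; apply/implyP => /andP[/andP[hp1 hp2] /andP[hq1 hq2]].
  have -> : (p : nat) = i by lia.
  have -> : (q : nat) = k by lia.
  exact: E.
Qed.

Lemma estarP B i k : inEstar B i i.+1 k k.+1 =
  [&& (0 < i < n)%N, (0 < k < n)%N &
      [&& cs B i k == cs B i k.-1 + 1, cs B i k.+1 == cs B i k,
          cs B i k == cs B i.-1 k + 1 & cs B i.+1 k == cs B i k]].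
Proof.
rewrite /inEstar /rect_ok; apply/idP/idP.
- case/andP => /and3P[h1 _ /and4P[h3 h4 _ h6]] /forallP H.
  have hi : (i < n.+1)%N by lia.
  have hk : (k < n.+1)%N by lia.
  move: (H (Ordinal hi)) => /forallP /(_ (Ordinal hk)) /implyP /=.
  rewrite ?leqnn ?ltnSn => /(_ isT) ->.
  by rewrite h1 h3 h4 h6.
- case/and3P => /andP[h1 h3] /andP[h4 h6] E.
  rewrite h1 h3 h4 h6 ?ltnSn ?leqnn /=.
  apply/forallP => p; apply/forallP => q; apply/implyP => /andP[/andP[hp1 hp2] /andP[hq1 hq2]].
  have -> : (p : nat) = i by lia.
  have -> : (q : nat) = k by lia.
  exact: E.
Qed.

Lemma rind_delta i k p q : rind i i.+1 k k.+1 p q = delta i k p q.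
Proof. by rewrite /rind /delta !ltnS -!eqn_leq (eq_sym i) (eq_sym k). Qed.

Lemma rop_cs B i k : essential_point B i k -> forall p q, (p <= n)%N -> (q <= n)%N ->
  cs (rop B i i.+1 k k.+1) p q = cs B p q + delta i k p q.
Proof.
move=> hE.
have E : forall p q, r_cs B i i.+1 k k.+1 p q = cs B p q + delta i k p q.
  by move=> p q; rewrite /r_cs -[Defs.inE _ _ _ _ _]/(essential_point B i k) hE rind_delta.
have hik := hE; rewrite essP in hik; case/and3P: hik => /andP[i1 i2] /andP[k1 k2] _.
have -> : rop B i i.+1 k k.+1 = mxf (r_cs B i i.+1 k k.+1) by [].
move=> p q hp hq; rewrite cs_mxf //; try move=> ?; rewrite E ?cs0l ?cs0r /delta; lia.
Qed.

Lemma le_all A B : asm_le A B -> forall p q, (p <= n)%N -> (q <= n)%N -> cs B p q <= cs A p q.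
Proof. move=> h [|p] [|q] hp hq; rewrite ?cs0l ?cs0r //; exact: h. Qed.

Lemma rop_valid B i k : valid B -> essential_point B i k -> valid (rop B i i.+1 k k.+1).
Proof.
case=> hH hV hn hn' hE; have R := @rop_cs B i k hE.
have hik := hE; rewrite essP in hik.
case/and3P: hik => /andP[i1 i2] /andP[k1 k2] /and4P[/eqP e1 /eqP e2 /eqP e3 /eqP e4].
split.
- move=> p q hp hq; rewrite !R //; last exact: ltnW.
  have := hH p q hp hq; rewrite /delta.
  case: (eqVneq p i) => [->|npi]; last by lia.
  case: (eqVneq q.+1 k) => [ek|nk].
    by subst k; rewrite /= in e1; lia.
  case: (eqVneq q k) => [ek|nk2]; last by lia.
  by subst k; lia.
- move=> p q hp hq; rewrite !R //; last exact: ltnW.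
  have := hV p q hp hq; rewrite /delta.
  case: (eqVneq q k) => [->|nqk]; last by lia.
  case: (eqVneq p.+1 i) => [ei|ni].
    by subst i; rewrite /= in e3; lia.
  case: (eqVneq p i) => [ei|ni2]; last by lia.
  by subst i; lia.
- by move=> q hq; rewrite R // hn // /delta; lia.
- by move=> p hp; rewrite R // hn' // /delta; lia.
Qed.


Lemma exmax (T : finType) (P : pred T) (h : T -> int) x0 : P x0 ->
  exists2 x, P x & forall y, P y -> h y <= h x.
Proof.
move=> Px0; case: (@arg_maxP _ _ T x0 P h Px0) => x Px H.
by exists x.
Qed.

Lemma cover_ess A B : valid A -> valid B -> asm_le A B -> A <> B ->
  exists i k, essential_point B i k /\ cs B i k < cs A i k.
Proof.
move=> [hHA hVA hnA hnA'] [hHB hVB hnB hnB'] hle hne.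
have hl := @le_all A B hle.
pose P := fun x : 'I_n.+1 * 'I_n.+1 => cs B x.1 x.2 < cs A x.1 x.2.
have [x0 Px0] : exists x0, P x0.
  case: (boolP [exists x, P x]) => [/existsP //|/existsPn H].
  exfalso; apply: hne; apply: cs_inj => p q /andP[_ hp] /andP[_ hq].
  have hp' : (p < n.+1)%N by []. have hq' : (q < n.+1)%N by [].
  have := H (Ordinal hp', Ordinal hq'); rewrite /P /= => H1.
  have := hl p q hp hq; lia.
pose h := fun x : 'I_n.+1 * 'I_n.+1 => (x.1 + x.2)%:Z - 2 * cs B x.1 x.2.
case: (@exmax _ P h x0 Px0) => [[i k]] Pik Hm.
rewrite /P /= in Pik.
have ord_le : forall x : 'I_n.+1, (x <= n)%N by move=> x; rewrite -ltnS.
have hi := ord_le i; have hk := ord_le k.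
have i0 : (0 < i)%N.
  case: (posnP i) Pik => [->|//]; rewrite !cs0l; lia.
have k0 : (0 < k)%N.
  case: (posnP k) Pik => [->|//]; rewrite !cs0r; lia.
have i1 : (i < n)%N.
  case: (ltngtP i n) hi Pik => // -> _; rewrite hnA ?hnB //; lia.
have k1 : (k < n)%N.
  case: (ltngtP k n) hk Pik => // -> _; rewrite hnA' ?hnB' //; lia.
exists i, k; split => //.
rewrite essP i0 i1 k0 k1 /=.
apply/and4P; split; apply/eqP.
-
  have hy : (k.-1 < n.+1)%N by lia.
  have := Hm (i, Ordinal hy); rewrite /P /h /= => Hy.
  have := hHB i k.-1 hi (leq_ltn_trans (leq_pred k) k1).
  have := hHA i k.-1 hi (leq_ltn_trans (leq_pred k) k1).
  rewrite prednK //.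
  case: (ltrP (cs B i k.-1) (cs A i k.-1)) => [/Hy|]; lia.
-
  have hy : (k.+1 < n.+1)%N by lia.
  have := Hm (i, Ordinal hy); rewrite /P /h /= => Hy.
  have := hHB i k hi k1.
  have := hHA i k hi k1.
  case: (ltrP (cs B i k.+1) (cs A i k.+1)) => [/Hy|]; lia.
-
  have hy : (i.-1 < n.+1)%N by lia.
  have := Hm (Ordinal hy, k); rewrite /P /h /= => Hy.
  have := hVB i.-1 k (leq_ltn_trans (leq_pred i) i1) hk.
  have := hVA i.-1 k (leq_ltn_trans (leq_pred i) i1) hk.
  rewrite prednK //.
  case: (ltrP (cs B i.-1 k) (cs A i.-1 k)) => [/Hy|]; lia.
-
  have hy : (i.+1 < n.+1)%N by lia.
  have := Hm (Ordinal hy, k); rewrite /P /h /= => Hy.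
  have := hVB i k i1 hk.
  have := hVA i k i1 hk.
  case: (ltrP (cs B i.+1 k) (cs A i.+1 k)) => [/Hy|]; lia.
Qed.


Lemma rop_covers B i k : valid B -> essential_point B i k ->
  is_asm (rop B i i.+1 k k.+1) /\ asm_covers (rop B i i.+1 k k.+1) B.
Proof.
move=> vB hE; have R := @rop_cs B i k hE.
have vC := @rop_valid B i k vB hE.
have hik := hE; rewrite essP in hik.
case/and3P: hik => /andP[i1 i2] /andP[k1 k2] _.
set C := rop B i i.+1 k k.+1 in R vC *.
have aC := @valid_asm C vC.
have leCB : asm_le C B.
  move=> p q /andP[_ hp] /andP[_ hq]; rewrite R // /delta; lia.
have neCB : C <> B.
  move=> eCB; have := R i k (ltnW i2) (ltnW k2); rewrite eCB /delta !eqxx; lia.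
split => //; split => //; first exact: (@valid_asm B vB).
move=> [E [aE [hCE neCE] [hEB neEB]]].
have lCE := @le_all C E hCE; have lEB := @le_all E B hEB.
have := lCE i k (ltnW i2) (ltnW k2); have := lEB i k (ltnW i2) (ltnW k2).
rewrite R ?(ltnW i2) ?(ltnW k2) // /delta !eqxx /= => h1 h2.
case: (ltrP (cs B i k) (cs E i k)) => h3.
- apply: neCE; apply: cs_inj => p q /andP[_ hp] /andP[_ hq].
  have := lCE p q hp hq; have := lEB p q hp hq; rewrite R // /delta.
  case: (eqVneq p i) => [->|?]; last by lia.
  case: (eqVneq q k) => [->|?]; lia.
- apply: neEB; apply: cs_inj => p q /andP[_ hp] /andP[_ hq].
  have := lCE p q hp hq; have := lEB p q hp hq; rewrite R // /delta.
  case: (eqVneq p i) => [->|?]; last by lia.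
  case: (eqVneq q k) => [->|?]; lia.
Qed.

Lemma covers_rop A B : valid B -> asm_covers A B ->
  exists i k, essential_point B i k /\ A = rop B i i.+1 k k.+1.
Proof.
move=> vB [aA aB [hle hne] hno].
have vA := @asm_valid A aA.
case: (@cover_ess A B vA vB hle hne) => i [k [hE hlt]].
exists i, k; split => //.
have R := @rop_cs B i k hE.
have hik := hE; rewrite essP in hik.
case/and3P: hik => /andP[i1 i2] /andP[k1 k2] _.
case: (@rop_covers B i k vB hE) => aC [_ _ [hCB neCB] _].
case: (eqVneq A (rop B i i.+1 k k.+1)) => // neAC.
exfalso; apply: hno; exists (rop B i i.+1 k k.+1); split; [exact: aC| |by split]; split; last by apply/eqP.
move=> p q /andP[_ hp] /andP[_ hq]; rewrite R // /delta.
have := @le_all A B hle p q hp hq.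
case: (eqVneq p i) => [->|?]; last by lia.
case: (eqVneq q k) => [->|?]; lia.
Qed.

Lemma ltr_sum_one (F G : 'I_n -> int) (io : 'I_n) :
  F io < G io -> (forall x, F x <= G x) -> \sum_x F x < \sum_x G x.
Proof.
move=> h1 h2; rewrite (bigD1 io) // [X in _ < X](bigD1 io) //.
by apply: ltr_leD => //; apply: ler_sum => x _.
Qed.

Lemma covers_edge A B : valid B -> asm_covers A B -> asm_edge A B.
Proof.
move=> vB hc; case: (@covers_rop A B vB hc) => i [k [hE ->]].
have R := @rop_cs B i k hE.
have hik := hE; rewrite essP in hik.
case/and3P: hik => /andP[i1 i2] /andP[k1 k2] /and4P[/eqP e1 /eqP e2 /eqP e3 /eqP e4].
set C := rop B i i.+1 k k.+1 in R *.
exists i, i.+1, k, k.+1; split.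
- by rewrite /rect_ok i1 i2 k1 k2 ?ltnSn ?leqnn.
- have nE : ~~ Defs.inE C i i.+1 k k.+1.
    rewrite -[Defs.inE _ _ _ _ _]/(essential_point C i k) essP.
    apply/negP => /and3P[_ _ /and4P[/eqP f1 _ _ _]].
    move: f1; rewrite !R ?(ltnW i2) ?(ltnW k2) ?(leq_trans (leq_pred k) (ltnW k2)) // /delta.
    lia.
  have sE : inEstar C i i.+1 k k.+1.
    rewrite estarP i1 i2 k1 k2 /=.
    rewrite !R ?(ltnW i2) ?(ltnW k2) ?(leq_trans (leq_pred k) (ltnW k2))
      ?(leq_trans (leq_pred i) (ltnW i2)) // /delta.
    apply/and4P; split; apply/eqP; lia.
  have RR : forall p q, r_cs C i i.+1 k k.+1 p q = cs C p q - delta i k p q.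
    by move=> p q; rewrite /r_cs (negbTE nE) sE rind_delta.
  have -> : rop C i i.+1 k k.+1 = mxf (r_cs C i i.+1 k k.+1) by [].
  apply: cs_inj => p q /andP[_ hp] /andP[_ hq].
  rewrite cs_mxf //; try move=> ?; rewrite RR ?cs0l ?cs0r /delta; try lia.
  rewrite R // /delta; lia.
- rewrite /beta.
  suff : \sum_(x < n) \sum_(y < n) cs B x.+1 y.+1 < \sum_(x < n) \sum_(y < n) cs C x.+1 y.+1 by lia.
  have io : (i.-1 < n)%N by lia.
  have ko : (k.-1 < n)%N by lia.
  apply: (@ltr_sum_one _ _ (Ordinal io)) => [|x].
  + apply: (@ltr_sum_one _ _ (Ordinal ko)) => [|y]; rewrite /= ?prednK //.
    * rewrite R ?(ltnW i2) ?(ltnW k2) // /delta !eqxx; lia.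
    * rewrite R // /delta; lia.
  + apply: ler_sum => y _; rewrite R // /delta; lia.
Qed.

End S.

Theorem mainTheorem7 (n : nat) (B : 'M[int]_n) (hB : is_asm B) :
  [/\ (forall A : 'M[int]_n, is_asm A ->
         (asm_covers A B <->
          exists i k, essential_point B i k /\ A = rop B i i.+1 k k.+1)),
      (forall i k, essential_point B i k ->
         is_asm (rop B i i.+1 k k.+1) /\ asm_covers (rop B i i.+1 k k.+1) B),
      (forall i k i' k', essential_point B i k -> essential_point B i' k' ->
         rop B i i.+1 k k.+1 = rop B i' i'.+1 k' k'.+1 -> i = i' /\ k = k') &
      (forall A : 'M[int]_n, asm_covers A B -> asm_edge A B)].
Proof.
have vB := @asm_valid n B hB.
split.
- move=> A aA; split; first exact: covers_rop.
  by move=> [i [k [hE ->]]]; case: (@rop_covers n B i k vB hE).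
- by move=> i k hE; exact: rop_covers.
- move=> i k i' k' hE hE' eq.
  have R := @rop_cs _ B i k hE; have R' := @rop_cs _ B i' k' hE'.
  have hik := hE; rewrite essP in hik.
  case/and3P: hik => /andP[i1 i2] /andP[k1 k2] _.
  have := R i k (ltnW i2) (ltnW k2); rewrite eq R' ?(ltnW i2) ?(ltnW k2) // /delta !eqxx /=.
  lia.
- by move=> A; exact: covers_edge.
Qed.
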